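(* Let $\mathcal{T}=[0,T_{max}]$, $\mathcal{T}_d,\mathcal{T}_a\subseteq\mathcal{T}$ compact, $\mathcal{X}=[X_{min},X_{max}]$, and $m$ a probability measure on $\mathcal{X}\times\mathcal{T}_a$. For every $G\in\mathbb{R}^+$, the set $\mathcal{P}_{m,G}$ is a closed subset of the space $\mathcal{P}(\mathcal{T}_d\times\mathcal{X})$ of Borel probability measures on $\mathcal{T}_d\times\mathcal{X}$, equipped with the topology of weak convergence of measures.
   Context: $\lambda_2$ denotes Lebesgue measure on $\mathbb{R}^2$. $\mathcal{P}_{m,G}$ is the set of all $F\in\mathcal{P}(\mathcal{T}_d\times\mathcal{X})$ such that (i) $F(B)\le G\,\lambda_2(B)$ for every Borel set $B\subseteq\mathcal{T}_d\times\mathcal{X}$, and (ii) $F(\mathcal{T}_d\times B)=m(B\times\mathcal{T}_a)$ for every Borel set $B\subseteq\mathcal{X}$. *)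

(* Defs.v *)
From HB Require Import structures.
From mathcomp Require Import all_boot all_order all_algebra.
From mathcomp Require Import all_classical all_reals all_analysis.
Set Implicit Arguments. Unset Strict Implicit. Unset Printing Implicit Defensive.
Import Order.TTheory GRing.Theory Num.Theory.
Import numFieldNormedType.Exports.
Local Open Scope classical_set_scope.
Local Open Scope ring_scope.

(* Points of R^2 are pairs (first coordinate, second coordinate); the product
   sigma-algebra on R * R is the Borel sigma-algebra of R^2. *)
Definition R2 (R : realType) := (measurableTypeR R * measurableTypeR R)%type.

Definition lambda2 (R : realType) : set (R2 R) -> \bar R :=
  ((@lebesgue_measure R) \x (@lebesgue_measure R))%E.

(* A Borel probability measure on a Borel set K of R^2 is represented by a
   probability measure on R^2 concentrated on K (F K = 1). *)
Definition prob_on (R : realType) (K : set (R2 R)) (F : probability (R2 R) R) :=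
  F K = 1%E.

Definition PmG (R : realType) (Td Ta X : set R) (m : probability (R2 R) R)
    (G : R) (F : probability (R2 R) R) : Prop :=
  prob_on (Td `*` X) F /\
  (forall B : set (R2 R), measurable B -> B `<=` Td `*` X ->
     (F B <= G%:E * lambda2 B)%E) /\
  (forall B : set R, measurable B -> B `<=` X ->
     F (Td `*` B) = m (B `*` Ta)).

(* Weak topology on P(K) (K compact): the topology of weak convergence of
   measures, i.e. the coarsest topology making F |-> \int_K f dF continuous
   for every continuous f : K -> R.  Its basic open neighbourhoods of F are
   { F' | |\int_K f_i dF' - \int_K f_i dF| < eps, i < n }.
   [weak_closure K P F] says that every such basic neighbourhood of F meets P,
   i.e. F lies in the weak closure of P. *)
Definition weak_closure (R : realType) (K : set (R2 R))
    (P : probability (R2 R) R -> Prop) (F : probability (R2 R) R) : Prop :=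
  forall (n : nat) (f : 'I_n -> R2 R -> R) (eps : R),
    (forall i, {within K, continuous (f i)}) -> 0 < eps ->
    exists F' : probability (R2 R) R,
      prob_on K F' /\ P F' /\
      forall i, (`| \int[F']_(x in K) (f i x)%:E - \int[F]_(x in K) (f i x)%:E |
                 < eps%:E)%E.

Definition weakly_closed (R : realType) (K : set (R2 R))
    (P : probability (R2 R) R -> Prop) : Prop :=
  (forall F, P F -> prob_on K F) /\
  forall F : probability (R2 R) R, prob_on K F -> weak_closure K P F -> P F.

(* Main.v *)
Require Import Defs.
From HB Require Import structures.
From mathcomp Require Import all_boot all_order all_algebra.
From mathcomp Require Import all_classical all_reals all_analysis.
Import Order.TTheory GRing.Theory Num.Theory.
Import numFieldNormedType.Exports.
Local Open Scope classical_set_scope.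
Local Open Scope ring_scope.
Section rect.
Variable R : realType.
Definition rectT : Type := (R * R)%type.
HB.instance Definition _ := Pointed.on rectT.
Definition orect : set (set rectT) :=
  [set I `*` J | I in (@ocitv R) & J in (@ocitv R)].

Lemma orect0 : orect set0.
Proof. by exists set0; [exact: ocitv0|exists set0; [exact: ocitv0|rewrite set0X]]. Qed.

Lemma orectI : setI_closed orect.
Proof.
move=> _ _ [I oI [J oJ <-]] [I' oI' [J' oJ' <-]].
exists (I `&` I'); first exact: ocitvI.
by exists (J `&` J'); [exact: ocitvI|rewrite setXI].
Qed.

Lemma orectD : semi_setD_closed orect.
Proof.
move=> _ _ [I oI [J oJ <-]] [I' oI' [J' oJ' <-]].
have [D1 [fD1 sD1 eD1 tD1]] := ocitvD oI oI'.
have [D2 [fD2 sD2 eD2 tD2]] := ocitvD oJ oJ'.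
exists ([set X `*` J | X in D1] `|` [set (I `&` I') `*` Y | Y in D2]); split.
- by rewrite finite_setU; split; exact: finite_image.
- move=> _ [[X DX <-]|[Y DY <-]].
    by exists X; [exact: sD1|exists J].
  by exists (I `&` I'); [exact: ocitvI|exists Y => //; exact: sD2].
- have h1 x : (I `\` I') x <-> exists2 X, D1 X & X x.
    by rewrite eD1; split => [[X ? ?]|[X ? ?]]; exists X.
  have h2 x : (J `\` J') x <-> exists2 Y, D2 Y & Y x.
    by rewrite eD2; split => [[X ? ?]|[X ? ?]]; exists X.
  apply/seteqP; split => -[x1 x2] /=.
    move=> [[Ix1 Jx2] nI'J'].
    have [I'x1|nI'x1] := pselect (I' x1).
      have /h2[Y DY Yx2] : (J `\` J') x2.
        by split => // J'x2; apply: nI'J'.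
      by exists ((I `&` I') `*` Y) => //; right; exists Y.
    have /h1[X DX Xx1] : (I `\` I') x1 by [].
    by exists (X `*` J) => //; left; exists X.
  move=> [_ [[X DX <-]|[Y DY <-]]] /= [Za Zb].
    have [Ix1 nI'x1] : (I `\` I') x1 by apply/h1; exists X.
    by split => // -[].
  have [Jx2 nJ'x2] : (J `\` J') x2 by apply/h2; exists Y.
  by case: Za => Ix1 I'x1; split => // -[].
- have h1 X x : D1 X -> X x -> (I `\` I') x.
    by move=> DX Xx; rewrite eD1; exists X.
  have h2 X x : D2 X -> X x -> (J `\` J') x.
    by move=> DX Xx; rewrite eD2; exists X.
  move=> _ _ [[X DX <-]|[Y DY <-]] [[X' DX' <-]|[Y' DY' <-]] [[x1 x2]] /=.
  + move=> [[Xx1 _] [X'x1 _]].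
    by rewrite (tD1 X X') //; exists x1.
  + move=> [[Xx1 _] [[_ I'x1] _]].
    by have [_ /(_ I'x1)] := h1 _ _ DX Xx1.
  + move=> [[[_ I'x1] _] [Xx1 _]].
    by have [_ /(_ I'x1)] := h1 _ _ DX' Xx1.
  + move=> [[_ Yx2] [_ Y'x2]].
    by rewrite (tD2 Y Y') //; exists x2.
Qed.

Definition rect_display : measure_display. Proof. exact. Qed.
HB.instance Definition _ := @isSemiRingOfSets.Build rect_display rectT orect orect0 orectI orectD.
End rect.

Lemma setXDl (T1 T2 : Type) (A : set T1) (J : set T2) : (setT `\` A) `*` J = (setT `*` J) `\` (A `*` J).
Proof.
apply/seteqP; split => -[x y]; rewrite /setD /setX /= => -[].
  by move=> [_ nA] Jy; split => // -[].
by move=> [_ Jy] nAJ; split => //; split => // Ax; apply: nAJ.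
Qed.
Lemma setXDr (T1 T2 : Type) (A : set T1) (B : set T2) : A `*` (setT `\` B) = (A `*` setT) `\` (A `*` B).
Proof.
apply/seteqP; split => -[x y]; rewrite /setD /setX /= => -[].
  by move=> Ax [_ nB]; split => // -[].
by move=> [Ax _] nAB; split => //; split => // By; apply: nAB.
Qed.

Section ext.
Variable R : realType.
Local Open Scope ereal_scope.

Lemma ocitv_meas (I : set R) : ocitv I -> measurable (I : set (measurableTypeR R)).
Proof. by move=> oI; apply: sub_sigma_algebra. Qed.

Lemma orect_meas (E : set (R2 R)) : orect R E -> measurable E.
Proof.
move=> [I oI [J oJ <-]]; apply: measurableX; exact: ocitv_meas.
Qed.

Lemma ext_le (mu1 mu2 : {measure set (R2 R) -> \bar R}) :
  mu1 setT < +oo -> mu2 setT < +oo ->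
  (forall I J : set R, ocitv I -> ocitv J -> mu1 (I `*` J) <= mu2 (I `*` J)) ->
  forall E, measurable E -> mu1 E <= mu2 E.
Proof.
move=> f1 f2 hr.
pose Good := [set E : set (R2 R) | measurable E /\ mu1 E <= mu2 E].
pose Rg := [set E : set (R * R) | measurable (E : set (SetRing.type (rectT R)))].
have ring_good : Rg `<=` Good.
  move=> E; rewrite /Rg /= SetRing.ring_measurableE => -[D [-> Dm Dfin Dtriv]].
  have Dm' : forall X, D X -> measurable (X : set (R2 R)).
    by move=> X /Dm; exact: orect_meas.
  split; first exact: fin_bigcup_measurable.
  rewrite !measure_fin_bigcup //; apply: lee_fsum => // X /Dm [I oI [J oJ <-]].
  exact: hr.
have monoG : monotone Good.
  split.
  - move=> F ndF GF; have mF i : measurable (F i) by case: (GF i).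
    have mU : measurable (\bigcup_i F i) by exact: bigcupT_measurable.
    split => //.
    have h1 := nondecreasing_cvg_mu (mu:=mu1) mF mU ndF.
    have h2 := nondecreasing_cvg_mu (mu:=mu2) mF mU ndF.
    refine (lee_cvg_to h1 h2 _).
    by apply: nearW => n /=; case: (GF n).
  - move=> F niF GF; have mF i : measurable (F i) by case: (GF i).
    have mU : measurable (\bigcap_i F i) by exact: bigcapT_measurable.
    split => //.
    have g1 : mu1 (F 0%N) < +oo by apply: le_lt_trans f1; apply: le_measure; rewrite ?inE.
    have g2 : mu2 (F 0%N) < +oo by apply: le_lt_trans f2; apply: le_measure; rewrite ?inE.
    have h1 := nonincreasing_cvg_mu g1 mF mU niF.
    have h2 := nonincreasing_cvg_mu g2 mF mU niF.
    refine (lee_cvg_to h1 h2 _).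
    by apply: nearW => n /=; case: (GF n).
have ringR : setring Rg.
  split; [exact: measurable0 | move=> A B; exact: measurableU | move=> A B; exact: measurableD].
have SG := monotone_setring_sub_g_sigma_ring monoG ringR ring_good.
pose S := <<sr Rg>>.
have [S0 SD SU] : sigma_ring S := smallest_sigma_ring Rg.
have RgS : Rg `<=` S := @sub_gen_smallest _ _ Rg.
have orS I J : ocitv I -> ocitv J -> S (I `*` J).
  move=> oI oJ; apply: RgS; apply: SetRing.measurable_subring.
  by exists I => //; exists J.
pose In (n : nat) := [set` Interval (BSide false (1 *- n)) (BSide false n%:R)] : set R.
have oIn n : ocitv (In n).
  exists (1 *- n, n%:R) => //.
have st1 J : ocitv J -> forall A, measurable (A : set (measurableTypeR R)) -> S (A `*` J).
  move=> oJ.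
  have TJ : S (setT `*` J).
    rewrite -(bigcup_itvT false false) setX_bigcupl; apply: SU => n.
    exact: (orS _ _ (oIn n) oJ).
  have sig : sigma_algebra setT [set A | S (A `*` J)].
    split => /=.
    - by rewrite set0X.
    - move=> A SA; rewrite setXDl.
      exact: SD.
    - by move=> F SF; rewrite setX_bigcupl; apply: SU.
  move=> A mA; apply: (smallest_sub sig _ mA) => I oI /=; exact: orS.
have st2 A : measurable (A : set (measurableTypeR R)) -> forall B, measurable (B : set (measurableTypeR R)) -> S (A `*` B).
  move=> mA.
  have AT : S (A `*` setT).
    rewrite -(bigcup_itvT false false) setX_bigcupr; apply: SU => n.
    exact: (st1 _ (oIn n) A mA).
  have sig : sigma_algebra setT [set B | S (A `*` B)].
    split => /=.
    - by rewrite setX0.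
    - move=> B SB; rewrite setXDr.
      exact: SD.
    - by move=> F SF; rewrite setX_bigcupr; apply: SU.
  move=> B mB; apply: (smallest_sub sig _ mB) => I oI /=; exact: st1.
have ST : S setT.
  rewrite -setXTT; exact: st2.
have sigS : sigma_algebra setT S.
  split => //; move=> A SA; exact: SD.
move=> E; rewrite measurable_prod_measurableType => mE.
have : S E.
  apply: (smallest_sub sigS _ mE) => _ [A mA [B mB <-]]; exact: st2.
by move/SG => [].
Qed.
End ext.
Section tent.
Context {R : realType}.
Definition tent (a a' b b' : R) (t : R) : R :=
  Num.max 0 (Num.min 1 (Num.min ((t - a) / (a' - a)) ((b' - t) / (b' - b)))).

Lemma tent_cont a a' b b' : continuous (tent a a' b b').
Proof.
move=> x; rewrite /tent.
apply: (@continuous_max R R (fun=> 0) (fun t => Num.min 1 (Num.min ((t - a) / (a' - a)) ((b' - t) / (b' - b))))).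
  exact: cvg_cst.
apply: (@continuous_min R R (fun=> 1)); first exact: cvg_cst.
apply: continuous_min.
  apply: continuousM; last exact: cvg_cst.
  by apply: cvgB; [exact: cvg_id| exact: cvg_cst].
apply: continuousM; last exact: cvg_cst.
by apply: cvgB; [exact: cvg_cst| exact: cvg_id].
Qed.

Lemma tent_ge0 a a' b b' t : 0 <= tent a a' b b' t.
Proof. by rewrite /tent le_max lexx. Qed.

Lemma tent_le1 a a' b b' t : tent a a' b b' t <= 1.
Proof. by rewrite /tent ge_max ler01 ge_min lexx. Qed.

Lemma tent_eq1 a a' b b' t : a < a' -> b < b' -> a' <= t <= b -> tent a a' b b' t = 1.
Proof.
move=> aa bb /andP[ta tb]; rewrite /tent.
have h1 : 1 <= (t - a) / (a' - a) by rewrite ler_pdivlMr ?subr_gt0 // mul1r lerB.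
have h2 : 1 <= (b' - t) / (b' - b) by rewrite ler_pdivlMr ?subr_gt0 // mul1r lerB.
have -> : Num.min 1 (Num.min ((t - a) / (a' - a)) ((b' - t) / (b' - b))) = 1.
  by apply/min_idPl; rewrite le_min h1 h2.
by apply/max_idPr; exact: ler01.
Qed.

Lemma tent_eq0 a a' b b' t : a < a' -> b < b' -> ~~ (a < t < b') -> tent a a' b b' t = 0.
Proof.
move=> aa bb; rewrite negb_and -!leNgt => /orP[ta|bt]; rewrite /tent; apply/max_idPl.
  rewrite ge_min; apply/orP; right; rewrite ge_min; apply/orP; left.
  by rewrite pmulr_lle0 ?invr_gt0 ?subr_gt0 // subr_le0.
rewrite ge_min; apply/orP; right; rewrite ge_min; apply/orP; right.
by rewrite pmulr_lle0 ?invr_gt0 ?subr_gt0 // subr_le0.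
Qed.
End tent.

Section transfer.
Variable R : realType.
Local Open Scope ereal_scope.

Lemma abs_lt (x y : \bar R) (e : R) : x \is a fin_num -> y \is a fin_num ->
  `|x - y| < e%:E -> y <= x + e%:E /\ x <= y + e%:E.
Proof.
move: x y => [x| |] [y| |] //= _ _.
rewrite lte_fin => h; rewrite -!EFinD !lee_fin.
move: h; rewrite ltr_distlC => /andP[h1 h2].
split; rewrite ltW //; first by rewrite -ltrBlDr.
Qed.

Variables (K : set (R2 R)) (mK : measurable K).

Lemma conc (F : probability (R2 R) R) : F K = 1 -> forall A, measurable A -> F A = F (A `&` K).
Proof.
move=> FK A mA.
have h0 : F (A `\` K) = 0.
  apply/eqP; rewrite eq_le measure_ge0 andbT.
  have : F (~` K) = 0.
    by rewrite probability_setC // FK subee.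
  move=> <-; apply: le_measure; rewrite ?inE //; first exact: measurableD.
    exact: measurableC.
have := measureDI F mA mK.
move=> ->; by rewrite -[X in X + _]/(F (A `\` K)) h0 add0e.
Qed.

Lemma int_fin (F : probability (R2 R) R) (f : R2 R -> R) : measurable_fun setT f ->
  (forall x, 0 <= f x)%R -> (forall x, f x <= 1)%R ->
  \int[F]_(x in K) (f x)%:E \is a fin_num.
Proof.
move=> mf f0 f1.
rewrite ge0_fin_numE; last by apply: integral_ge0 => x _; rewrite lee_fin.
apply: (@le_lt_trans _ _ (\int[F]_(x in K) (\1_setT x)%:E)).
  apply: ge0_le_integral => //.
  - by move=> x _; rewrite lee_fin.
  - by apply/measurable_realfun.measurable_EFinP; exact: measurable_funS mf.
  - by apply/measurable_realfun.measurable_EFinP; exact: measurable_realfun.measurable_indic.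
  - by move=> x _; rewrite indicE mem_set // lee_fin.
rewrite integral_indic // setTI; apply: le_lt_trans (probability_le1 F mK) _.
exact: ltry.
Qed.

Lemma transfer (P : probability (R2 R) R -> Prop) (F : probability (R2 R) R) :
  F K = 1 -> weak_closure K P F ->
  forall f : R2 R -> R, continuous f -> measurable_fun setT f ->
  (forall x, 0 <= f x)%R -> (forall x, f x <= 1)%R ->
  forall C D : set (R2 R), measurable C -> measurable D ->
  (forall x, C x -> f x = 1%R) -> (forall x, ~ D x -> f x = 0%R) ->
  forall eps : R, (0 < eps)%R -> exists F' : probability (R2 R) R,
    F' K = 1 /\ P F' /\ F (C `&` K) <= F' (D `&` K) + eps%:E /\
    F' (C `&` K) <= F (D `&` K) + eps%:E.
Proof.
move=> FK hcl f cf mf f0 f1 C D mC mD hC hD eps heps.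
have [F' [F'K [PF' hi]]] := hcl 1%N (fun _ => f) eps (fun _ => continuous_subspaceT cf) heps.
have h := hi ord0.
have lo (Q : probability (R2 R) R) : Q (C `&` K) <= \int[Q]_(x in K) (f x)%:E.
  rewrite -integral_indic //; apply: ge0_le_integral => //.
  - by apply/measurable_realfun.measurable_EFinP; exact: measurable_realfun.measurable_indic.
  - by apply/measurable_realfun.measurable_EFinP; exact: measurable_funS mf.
  - move=> x _; rewrite indicE lee_fin; have [/set_mem Cx|_] := boolP (x \in C).
      by rewrite hC.
    by rewrite f0.
have up (Q : probability (R2 R) R) : \int[Q]_(x in K) (f x)%:E <= Q (D `&` K).
  rewrite -integral_indic //; apply: ge0_le_integral => //.
  - by move=> x _; rewrite lee_fin.
  - by apply/measurable_realfun.measurable_EFinP; exact: measurable_funS mf.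
  - by apply/measurable_realfun.measurable_EFinP; exact: measurable_realfun.measurable_indic.
  - move=> x _; rewrite indicE lee_fin; have [/set_mem Dx|/negP nD] := boolP (x \in D).
      by rewrite f1.
    by rewrite hD // => /mem_set.
have [h1 h2] := abs_lt _ _ _ (int_fin F' f mf f0 f1) (int_fin F f mf f0 f1) h.
exists F'; split => //; split => //; split.
- apply: le_trans (lo F) _; apply: le_trans h1 _; rewrite leeD2r //.
- apply: le_trans (lo F') _; apply: le_trans h2 _; rewrite leeD2r //.
Qed.
End transfer.
Section itv.
Variable R : realType.
Local Notation e n := (n.+1%:R^-1 : R).

Lemma up_itv (a b : R) : \bigcup_n `[a + e n, b]%classic = `]a, b]%classic.
Proof. by rewrite (itv_open_bnd_bigcup false b a). Qed.

Lemma nd_up (a b : R) : nondecreasing_seq (fun n => `[a + e n, b]%classic).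
Proof.
move=> n m nm; apply/subsetPset => x /=; rewrite !in_itv /= => /andP[h1 ->].
rewrite andbT; apply: le_trans h1; rewrite lerD2l lef_pV2 ?posrE ?ltr0n // ler_nat ltnS //.
Qed.

Lemma down_itv (a b : R) : \bigcap_n `]a, b + e n]%classic = `]a, b]%classic.
Proof.
apply/seteqP; split => x /=.
  move=> h; have := h 0%N I; rewrite /= in_itv /= => /andP[ax _].
  have : (\bigcap_k [set` Interval -oo%O (BSide false (b + k.+1%:R^-1))]) x.
    move=> n _ /=.
    by have := h n I; rewrite /= !in_itv /= => /andP[_ ->].
  rewrite -itvNycEbigcap /= !in_itv /= => xb.
  by rewrite ax xb.
rewrite in_itv /= => /andP[ax xb] n _ /=; rewrite in_itv /= ax /=.
by rewrite ler_wpDr // invr_ge0 ler0n.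
Qed.

Lemma ni_down (a b : R) : nonincreasing_seq (fun n => `]a, b + e n]%classic).
Proof.
move=> n m nm; apply/subsetPset => x /=; rewrite !in_itv /= => /andP[ax h1].
rewrite ax /=; apply: le_trans h1 _; rewrite lerD2l lef_pV2 ?posrE ?ltr0n // ler_nat ltnS //.
Qed.

End itv.

Section lim.
Local Open Scope ereal_scope.
Lemma lim_le d (T : measurableType d) (R : realType) (mu nu : {measure set T -> \bar R})
  (A B : (set T)^nat) : (forall n, measurable (A n)) -> (forall n, measurable (B n)) ->
  nondecreasing_seq A -> nonincreasing_seq B -> nu (B 0%N) < +oo ->
  (forall n, mu (A n) <= nu (B n)) -> mu (\bigcup_n A n) <= nu (\bigcap_n B n).
Proof.
move=> mA mB ndA niB nuB h.
have h1 := nondecreasing_cvg_mu (mu:=mu) mA (bigcupT_measurable _ mA) ndA.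
have h2 := nonincreasing_cvg_mu nuB mB (bigcapT_measurable mB) niB.
refine (lee_cvg_to h1 h2 _).
by apply: nearW => n /=.
Qed.
End lim.

Local Notation e n := (n.+1%:R^-1)%R.

Section parta.
Variable R : realType.

Lemma rectU (a b c d : R) :
  `]a, b]%classic `*` `]c, d]%classic =
  \bigcup_n (`[a + e n, b]%classic `*` `[c + e n, d]%classic).
Proof.
rewrite -up_itv -up_itv; apply/seteqP; split => -[x y] /=.
  move=> [[i _ hi] [j _ hj]]; exists (maxn i j) => //; split.
    by have /subsetPset := nd_up _ a b _ _ (leq_maxl i j); apply.
  by have /subsetPset := nd_up _ c d _ _ (leq_maxr i j); apply.
by move=> [n _ [h1 h2]]; split; exists n.
Qed.

Lemma rectI (a b c d : R) :
  `]a, b]%classic `*` `]c, d]%classic =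
  \bigcap_n (`]a, b + e n]%classic `*` `]c, d + e n]%classic).
Proof.
rewrite -down_itv -down_itv; apply/seteqP; split => -[x y] /=.
  by move=> [h1 h2] n _; split; [exact: h1|exact: h2].
by move=> h; split => n _; have [] := h n I.
Qed.

Lemma tent2_prop (a b c d eps : R) : (0 < eps)%R ->
  let f := fun x : R2 R => (tent a (a + eps) b (b + eps) x.1 * tent c (c + eps) d (d + eps) x.2)%R in
  [/\ continuous f, measurable_fun setT f, (forall x, 0 <= f x)%R,
      (forall x, f x <= 1)%R &
      ((forall x, (`[a + eps, b]%classic `*` `[c + eps, d]%classic) x -> f x = 1%R) /\
      (forall x, ~ (`]a, b + eps]%classic `*` `]c, d + eps]%classic) x -> f x = 0%R))].
Proof.
move=> he f.
have l1 (u : R) : (u < u + eps)%R by rewrite ltrDl.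
split.
- rewrite /f => x; apply: (@continuousM R (R2 R) (fun x => tent a (a+eps) b (b+eps) x.1) (fun x => tent c (c+eps) d (d+eps) x.2) x).
    by apply: continuous_comp; [exact: cvg_fst | exact: tent_cont].
  by apply: continuous_comp; [exact: cvg_snd | exact: tent_cont].
- rewrite /f; apply: measurable_realfun.measurable_funM.
    apply: measurableT_comp; last exact: measurable_fst.
    exact: measurable_realfun.continuous_measurable_fun (tent_cont _ _ _ _).
  apply: measurableT_comp; last exact: measurable_snd.
  exact: measurable_realfun.continuous_measurable_fun (tent_cont _ _ _ _).
- by move=> x; rewrite /f mulr_ge0 // tent_ge0.
- by move=> x; rewrite /f mulr_ile1 // ?tent_ge0 ?tent_le1.
split.
- move=> [x y] [] /=; rewrite !in_itv /= => hx hy.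
  by rewrite /f /= !tent_eq1 ?mulr1.
- move=> [x y] /= hn; rewrite /f /=.
  have [hx|hx] := boolP (a < x < b + eps)%R; last by rewrite tent_eq0 ?mul0r.
  have [hy|hy] := boolP (c < y < d + eps)%R; last by rewrite [tent c _ d _ y]tent_eq0 ?mulr0.
  exfalso; apply: hn; split; rewrite /= in_itv /=.
    by case/andP: hx => -> /ltW.
  by case/andP: hy => -> /ltW.
Qed.

End parta.

Section parta2.
Variable R : realType.
Local Open Scope ereal_scope.

Lemma part_a (K : set (R2 R)) (mK : measurable K) (P : probability (R2 R) R -> Prop)
  (F : probability (R2 R) R) (FK : F K = 1) (hcl : weak_closure K P F)
  (G : R) (hG : (0 < G)%R) (l2K : lambda2 K < +oo)
  (hP : forall F', P F' -> forall B, measurable B -> B `<=` K -> F' B <= G%:E * lambda2 B) :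
  forall B, measurable B -> B `<=` K -> F B <= G%:E * lambda2 B.
Proof.
pose l2 : {measure set (R2 R) -> \bar R} := (@lebesgue_measure R \x @lebesgue_measure R)%E.
pose mu2 := mscale (NngNum (ltW hG)) (mrestr l2 mK).
have mu2E A : mu2 A = G%:E * lambda2 (A `&` K) by [].
have mu2T : mu2 setT < +oo.
  have l2K' : lambda2 K \is a fin_num by rewrite ge0_fin_numE // (measure_ge0 l2).
  by rewrite mu2E setTI -ge0_fin_numE ?mule_ge0 ?lee_fin ?(ltW hG) ?(measure_ge0 l2) // fin_numM.
have rect : forall I J, ocitv I -> ocitv J -> F (I `*` J) <= mu2 (I `*` J).
  move=> _ _ [[a b] _ <-] [[c d] _ <-] /=.
  rewrite {1}(rectU _ a b c d) (rectI _ a b c d).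
  apply: lim_le.
  - by move=> n; apply: measurableX; exact: measurable_itv.
  - by move=> n; apply: measurableX; exact: measurable_itv.
  - move=> n k nk; apply/subsetPset; apply: setSX; apply/subsetPset; exact: nd_up.
  - move=> n k nk; apply/subsetPset; apply: setSX; apply/subsetPset; exact: ni_down.
  - apply: le_lt_trans mu2T; apply: le_measure; rewrite ?inE //.
    by apply: measurableX; exact: measurable_itv.
  move=> n.
  have he : (0 < n.+1%:R^-1 :> R)%R by rewrite invr_gt0 ltr0n.
  have := tent2_prop _ a b c d _ he => /= -[cf mf f0 f1 [hC hD]].
  have mC : measurable (`[(a + e n)%R, b]%classic `*` `[(c + e n)%R, d]%classic : set (R2 R)).
    by apply: measurableX; exact: measurable_itv.
  have mD : measurable (`]a, (b + e n)%R]%classic `*` `]c, (d + e n)%R]%classic : set (R2 R)).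
    by apply: measurableX; exact: measurable_itv.
  rewrite (@conc _ _ mK F FK _ mC).
  apply/lee_addgt0Pr => eps heps.
  have [F' [F'K [PF' [h1 _]]]] := @transfer _ _ mK P F FK hcl _ cf mf f0 f1 _ _ mC mD hC hD eps heps.
  apply: le_trans h1 _; rewrite leeD2r //.
  exact: (hP F' PF' _ (measurableI _ _ mD mK) (@subIsetr _ _ _)).
move=> B mB BK.
have hF : F setT < +oo by rewrite probability_setT ltry.
apply: le_trans (@ext_le _ F mu2 hF mu2T rect B mB) _.
change (G%:E * lambda2 (B `&` K) <= G%:E * lambda2 B); by rewrite setIidl.
Qed.
End parta2.

Section partb.
Variable R : realType.

Lemma E1 (A I B : set R) : (snd @^-1` I `&` (A `*` B) : set (R * R)) = A `*` (I `&` B).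
Proof. by apply/seteqP; split => -[x y] /= [h1 [h2 h3]]. Qed.

Lemma E2 (A I B : set R) : (fst @^-1` I `&` (A `*` B) : set (R * R)) = (I `&` A) `*` B.
Proof. by apply/seteqP; split => -[x y] /= [h1 h2]; [case: h2 | case: h1]. Qed.

Lemma tent1_prop (a b eps : R) : (0 < eps)%R ->
  let f := fun x : R2 R => tent a (a + eps) b (b + eps) x.2 in
  [/\ continuous f, measurable_fun setT f, (forall x, 0 <= f x)%R,
      (forall x, f x <= 1)%R &
      ((forall x, (snd @^-1` `[a + eps, b]%classic) x -> f x = 1%R) /\
      (forall x, ~ (snd @^-1` `]a, b + eps]%classic) x -> f x = 0%R))].
Proof.
move=> he f.
have l1 (u : R) : (u < u + eps)%R by rewrite ltrDl.
split.
- rewrite /f => x.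
  by apply: continuous_comp; [exact: cvg_snd | exact: tent_cont].
- rewrite /f; apply: measurableT_comp; last exact: measurable_snd.
  exact: measurable_realfun.continuous_measurable_fun (tent_cont _ _ _ _).
- by move=> x; rewrite /f tent_ge0.
- by move=> x; rewrite /f tent_le1.
split.
- move=> [x y] /=; rewrite !in_itv /= => hy.
  by rewrite /f /= tent_eq1.
- move=> [x y] /= hn; rewrite /f /=.
  have [hy|hy] := boolP (a < y < b + eps)%R; last by rewrite tent_eq0.
  exfalso; apply: hn; rewrite /= in_itv /=.
  by case/andP: hy => -> /ltW.
Qed.

Local Open Scope ereal_scope.

Lemma part_b (Td X Ta : set R) (mTd : measurable Td) (mX : measurable X) (mTa : measurable Ta)
  (P : probability (R2 R) R -> Prop) (F : probability (R2 R) R)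
  (FK : F (Td `*` X) = 1) (hcl : weak_closure (Td `*` X) P F)
  (m : probability (R2 R) R) (hm : m (X `*` Ta) = 1)
  (hP : forall F', P F' -> forall B, measurable B -> B `<=` X -> F' (Td `*` B) = m (B `*` Ta)) :
  forall B, measurable B -> B `<=` X -> F (Td `*` B) = m (B `*` Ta).
Proof.
have mK : measurable (Td `*` X : set (R2 R)) := measurableX mTd mX.
have mK' : measurable (X `*` Ta : set (R2 R)) := measurableX mX mTa.
pose nu1 : {measure set (measurableTypeR R) -> \bar R} :=
  measure_function_pushforward__canonical__measure_function_Measure (R:=R) F (@measurable_snd _ _ _ _).
pose nu2 : {measure set (measurableTypeR R) -> \bar R} :=
  measure_function_pushforward__canonical__measure_function_Measure (R:=R) m (@measurable_fst _ _ _ _).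
have msnd (I : set R) : measurable I -> measurable (snd @^-1` I : set (R2 R)).
  by move=> mI; rewrite -[X in measurable X]setTI; exact: measurable_snd.
have mfst (I : set R) : measurable I -> measurable (fst @^-1` I : set (R2 R)).
  by move=> mI; rewrite -[X in measurable X]setTI; exact: measurable_fst.
have nu1E (I : set R) : measurable I -> nu1 I = F (snd @^-1` I `&` (Td `*` X)).
  move=> mI; rewrite -(@conc _ _ mK F FK _ (msnd _ mI)) //.
have nu2E (I : set R) : measurable I -> nu2 I = m (fst @^-1` I).
  by [].
have margP (Q : probability (R2 R) R) : P Q -> forall I, measurable I ->
    Q (snd @^-1` I `&` (Td `*` X)) = nu2 I.
  move=> PQ I mI.
  have mIX : measurable (I `&` X) := measurableI _ _ mI mX.
  rewrite E1 (hP Q PQ _ mIX (@subIsetr _ _ _)) -E2.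
  by rewrite nu2E // (@conc _ _ mK' m hm _ (mfst _ mI)).
have mitv (i : interval R) : measurable ([set` i] : set R) := measurable_itv i.
have bound (a b : R) (n : nat) :
    nu1 `[(a + e n)%R, b]%classic <= nu2 `]a, (b + e n)%R]%classic /\
    nu2 `[(a + e n)%R, b]%classic <= nu1 `]a, (b + e n)%R]%classic.
  have he : (0 < n.+1%:R^-1 :> R)%R by rewrite invr_gt0 ltr0n.
  have := tent1_prop a b _ he => /= -[cf mf f0 f1 [hC hD]].
  have mC := msnd _ (mitv `[(a + e n)%R, b]).
  have mD := msnd _ (mitv `]a, (b + e n)%R]).
  split; apply/lee_addgt0Pr => eps heps;
    have [F' [F'K [PF' [h1 h2]]]] := @transfer _ _ mK P F FK hcl _ cf mf f0 f1 _ _ mC mD hC hD eps heps.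
  - rewrite nu1E //; apply: le_trans h1 _; rewrite leeD2r // margP //.
  - rewrite -(margP F' PF') //; apply: le_trans h2 _; rewrite leeD2r // nu1E //.
have fin1 (A : set R) : measurable A -> nu1 A < +oo.
  move=> mA; rewrite nu1E //; apply: le_lt_trans (probability_le1 _ (measurableI _ _ (msnd _ mA) mK)) _.
  exact: ltry.
have fin2 (A : set R) : measurable A -> nu2 A < +oo.
  move=> mA; rewrite nu2E //; apply: le_lt_trans (probability_le1 _ (mfst _ mA)) _.
  exact: ltry.
have lim12 (a b : R) : nu1 `]a, b]%classic <= nu2 `]a, b]%classic.
  rewrite -{1}(up_itv _ a b) -(down_itv _ a b).
  apply: lim_le => //.
  - exact: nd_up.
  - exact: ni_down.
  - exact: fin2.
  - by move=> n; have [] := bound a b n.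
have lim21 (a b : R) : nu2 `]a, b]%classic <= nu1 `]a, b]%classic.
  rewrite -{1}(up_itv _ a b) -(down_itv _ a b).
  apply: lim_le => //.
  - exact: nd_up.
  - exact: ni_down.
  - exact: fin1.
  - by move=> n; have [] := bound a b n.
have eqo : forall A, ocitv A -> nu1 A = nu2 A.
  by move=> _ [[a b] _ <-]; apply/eqP; rewrite eq_le lim12 lim21.
pose In (n : nat) := [set` Interval (BSide false (1 *- n)) (BSide false n%:R)] : set R.
have oIn n : ocitv (In n) by exists (1 *- n, n%:R).
have cover : \bigcup_n In n = setT by exact: bigcup_itvT.
move=> B mB BX.
have heq := @measure_unique _ _ (measurableTypeR R) (ocitv (R:=R)) In erefl (@ocitvI R) oIn cover nu1 nu2 eqo (fun k => fin1 _ (measurable_itv _)) B mB.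
have -> : Td `*` B = snd @^-1` B `&` (Td `*` X) by rewrite E1 setIidl.
rewrite -nu1E // heq nu2E // (@conc _ _ mK' m hm _ (mfst _ mB)) E2 setIidl //.
Qed.
End partb.

Lemma l2_fin (R : realType) (a b c d : R) (K : set (R2 R)) : measurable K ->
  K `<=` `[a, b]%classic `*` `[c, d]%classic -> (lambda2 K < +oo)%E.
Proof.
move=> mK sK; rewrite /lambda2.
apply: (@le_lt_trans _ _ (((@lebesgue_measure R) \x (@lebesgue_measure R))%E (`[a, b]%classic `*` `[c, d]%classic))).
  apply: le_measure; rewrite ?inE //.
  by apply: measurableX; exact: measurable_itv.
rewrite product_measure1E; try exact: measurable_itv.
change ((@lebesgue_measure R (`[a, b]%classic : set R)) * (@lebesgue_measure R (`[c, d]%classic : set R)) < +oo)%E.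
rewrite !lebesgue_measure_itv /=.
by case: ifP => _; case: ifP => _; rewrite ?mule0 ?mul0e -?EFinD -?EFinM ?ltry.
Qed.

Theorem proposition3 (R : realType) (Tmax Xmin Xmax : R) (Td Ta : set R)
    (hTmax : 0 <= Tmax) (hX : Xmin <= Xmax)
    (hTd : compact Td) (hTdT : Td `<=` `[0, Tmax])
    (hTa : compact Ta) (hTaT : Ta `<=` `[0, Tmax])
    (m : probability (R2 R) R) (hm : prob_on (`[Xmin, Xmax] `*` Ta) m)
    (G : R) (hG : 0 < G) :
  weakly_closed (Td `*` `[Xmin, Xmax]) (PmG Td Ta `[Xmin, Xmax] m G).
Proof.
have mTd : measurable Td := measurable_realfun.closed_measurable (compact_closed (@Rhausdorff R) hTd).
have mTa : measurable Ta := measurable_realfun.closed_measurable (compact_closed (@Rhausdorff R) hTa).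
have mX : measurable (`[Xmin, Xmax]%classic : set R) := measurable_itv _.
have mK : measurable (Td `*` `[Xmin, Xmax]%classic : set (R2 R)) := measurableX mTd mX.
split; first by move=> F [].
move=> F FK hcl.
split => //.
have l2K : (lambda2 (Td `*` `[Xmin, Xmax]%classic) < +oo)%E.
  apply: (@l2_fin R 0 Tmax Xmin Xmax) => //.
  by move=> [x y] [/= hx hy]; split => //; exact: hTdT.
split.
- apply: (@part_a R _ mK _ F FK hcl G hG l2K) => F' [_ [hi _]]; exact: hi.
- apply: (@part_b R _ _ _ mTd mX mTa _ F FK hcl m hm) => F' [_ [_ hii]]; exact: hii.
Qed.
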